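(* Consider the uniform noising process on $[S]^d$ from $q_0$, fix $T>0$, and let $(\overleftarrow x_t)_{t\in[0,T]}$ be its reverse process. Then for all $0\le\ell<t<T$, $i\in[d]$, $c\in[S]$ and $x_\ell\in[S]^d$, $$\mathbb E_{x_t\sim\overleftarrow q_{t\mid\ell}(\cdot\mid x_\ell)}\big[s_{T-t}(x_t\oplus_ic,x_t)\big]=s_{T-\ell}(x_\ell\oplus_ic,x_\ell).$$ Equivalently, for any function $g$ of $x_\ell$, $\mathbb E_{x_t\sim\overleftarrow q_{t\mid\ell}(\cdot\mid x_\ell)}\big[(s_{T-\ell}(x_\ell\oplus_ic,x_\ell)-s_{T-t}(x_t\oplus_ic,x_t))\,g(x_\ell)\big]=0$.
   Context: Uniform noising process: time-homogeneous CTMC on $[S]^d$ with rates $Q(x,y)=1/S$ if $x,y$ are at Hamming distance one, $0$ at Hamming distance $\ge2$; $q_t$ is its time-$t$ law; $s_t(y,x)=q_t(y)/q_t(x)$. Reverse process on $[0,T]$: the CTMC started from $q_T$ with rates $\overleftarrow Q_t(x,y)=Q(y,x)s_{T-t}(y,x)$ for $x\ne y$, whose time-$t$ marginal is $q_{T-t}$; $\overleftarrow q_{t\mid\ell}(\cdot\mid x_\ell)$ is the conditional law of its state at time $t$ given state $x_\ell$ at time $\ell$. $x\oplus_i c$: $x$ with coordinate $i$ replaced by $(x^i+c)\bmod S$, convention $0\bmod S=S$. *)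

(* Defs.v *)
From HB Require Import structures.
From mathcomp Require Import all_boot all_order all_algebra.
From mathcomp Require Import all_classical all_reals all_analysis.
Set Implicit Arguments. Unset Strict Implicit. Unset Printing Implicit Defensive.
Import Order.TTheory GRing.Theory Num.Theory.
Import numFieldNormedType.Exports.
Local Open Scope ring_scope.

(* State space [S]^d.  Coordinate values are represented in 'I_S = {0,..,S-1},
   the value v in [S] = {1,..,S} being represented by v - 1. *)
Definition state (S d : nat) := {ffun 'I_d -> 'I_S}.

Definition hamming (S d : nat) (x y : state S d) : nat := #|[set j | x j != y j]|.

(* x (+)_i c : coordinate i replaced by (x^i + c) mod S with 0 mod S = S.
   In the shifted representation this is (x^i + c) %% S.  (insubd default is
   never used when 0 < S.) *)
Definition oplus (S d : nat) (x : state S d) (i : 'I_d) (c : nat) : state S d :=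
  [ffun j => if j == i then insubd (x j) (((x j : nat) + c) %% S)%N else x j].

Definition Qrate (R : realType) (S d : nat) (x y : state S d) : R :=
  if hamming x y == 1%N then S%:R^-1 else 0.

Definition Qgen (R : realType) (S d : nat) (x y : state S d) : R :=
  if x == y then - \sum_(z | z != x) Qrate R x z else Qrate R x y.

Definition score (R : realType) (S d : nat) (q : R -> state S d -> R)
  (t : R) (y x : state S d) : R := q t y / q t x.

Definition Qrev_rate (R : realType) (S d : nat) (q : R -> state S d -> R)
  (T t : R) (x y : state S d) : R :=
  Qrate R y x * score q (T - t) y x.

Definition Qrev (R : realType) (S d : nat) (q : R -> state S d -> R)
  (T t : R) (x y : state S d) : R :=
  if x == y then - \sum_(z | z != x) Qrev_rate q T t x z else Qrev_rate q T t x y.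

(* Main.v *)
Require Import Defs.
From HB Require Import structures.
From mathcomp Require Import all_boot all_order all_algebra.
From mathcomp Require Import all_classical all_reals all_analysis.
From mathcomp Require Import ring lra.
Import Order.TTheory GRing.Theory Num.Theory.
Import numFieldNormedType.Exports.
Local Open Scope ring_scope.
Local Open Scope classical_set_scope.

Section Aux.
Context {R : realType}.

Lemma is_derive_bigsum (I : finType) (h : I -> R -> R) (dh : I -> R) (x : R) :
  (forall i, is_derive x 1 (h i) (dh i)) ->
  is_derive x 1 (fun u => \sum_i h i u) (\sum_i dh i).
Proof.
move=> H; rewrite unlock /=; elim: (index_enum I) => [|a s IH] /=.
  exact: is_derive_cst.
have := is_deriveD (H a) IH.
by [].
Qed.

Lemma cont_of_derive {f : R -> R} {x df : R} : is_derive x 1 f df -> {for x, continuous f}.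
Proof.
move=> [d _]; apply/differentiable_continuous; rewrite -derivable1_diffP //.
Qed.

Lemma der_of {f : R -> R} {x df : R} : is_derive x 1 f df -> derivable f x 1.
Proof. by case. Qed.

End Aux.

Section Aux2.
Context {R : realType}.

Lemma is_derive_lin (k r : R) : is_derive r 1 (fun v : R => k * v) k.
Proof.
have := @is_deriveZ R R R id k r 1 1 (is_derive_id r 1).
move=> H; exact: (is_derive_eq H (mulr1 k)).
Qed.

Lemma is_derive_expRk (k r : R) :
  is_derive r 1 (fun v : R => expR (k * v)) (k * expR (k * r)).
Proof.
have := @is_derive1_comp R expR (fun v : R => k * v) r _ _ (is_derive_expR _) (is_derive_lin k r).
by rewrite mulrC.
Qed.

Lemma le_sum_term {I : finType} (F : I -> R) j :
  (forall i, 0 <= F i) -> F j <= \sum_i F i.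
Proof.
move=> H; rewrite (bigD1 j) //= lerDl; apply: sumr_ge0 => i _; exact: H.
Qed.

End Aux2.

Section Ode.
Context {R : realType}.

Lemma ode_nonneg (I : finType) (a : I -> I -> R) (u : R -> I -> R) :
  (forall x y, x != y -> 0 <= a y x) ->
  (forall (s : R) x, is_derive s 1 (fun v => u v x) (\sum_y u s y * a y x)) ->
  (forall x, 0 <= u 0 x) -> forall (s : R) x, 0 <= s -> 0 <= u s x.
Proof.
move=> ha hd h0 s x0 s0; rewrite leNgt; apply/negP => hneg.
pose L : R := \sum_x \sum_y `|a y x| + 1.
have hsumL : forall x, \sum_y `|a y x| <= L - 1.
  move=> x; rewrite /L addrK.
  have := le_sum_term (fun x => \sum_y `|a y x|) x. apply => i; apply: sumr_ge0 => j _; exact: normr_ge0.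
have hLb : forall x y, `|a y x| < L.
  move=> x y; have := hsumL x.
  have := le_sum_term (fun y => `|a y x|) y (fun i => normr_ge0 _); rewrite /=.
  lra.
have L0 : 0 < L by have := hLb x0 x0; have := normr_ge0 (a x0 x0); lra.
have hLs : forall x, \sum_y a y x < L.
  move=> x; apply: (le_lt_trans (ler_sum _ (fun y _ => ler_norm (a y x)))).
  by have := hsumL x; lra.
have hLd : forall x, 0 <= a x x + L.
  by move=> x; have := hLb x x; have := ler_norm (- a x x); rewrite normrN; lra.
pose e r := expR (L * r).
pose eps : R := - u s x0 / (2 * e s).
have es0 : 0 < e s by exact: expR_gt0.
have eps0 : 0 < eps by rewrite /eps divr_gt0 // ?mulr_gt0 //; lra.
pose w x r := e r * u r x + eps * expR ((2 * L) * r).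
have e2 : forall r, expR ((2 * L) * r) = e r * e r.
  by move=> r; rewrite /e -expRD; congr expR; ring.
pose dw x r := L * e r * u r x + e r * (\sum_y u r y * a y x) + eps * (2 * L * expR ((2 * L) * r)).
have hw : forall (r : R) x, is_derive r 1 (w x) (dw x r).
  move=> r x.
  have H := is_deriveD (is_deriveM (is_derive_expRk L r) (hd r x))
     (is_deriveM (is_derive_cst eps r 1) (is_derive_expRk (2 * L) r)).
  apply: (is_derive_eq H); rewrite /dw /e /GRing.scale /=; ring.
have hpos : forall r x, (forall y, 0 <= w y r) -> 0 < dw x r.
  move=> r x hy.
  have hsplit : e r * (\sum_y u r y * a y x) =
      \sum_y w y r * a y x - eps * (e r * e r) * \sum_y a y x.
    rewrite mulr_sumr mulr_sumr -sumrB; apply: eq_bigr => y _.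
    rewrite /w e2; ring.
  have hnn : 0 <= \sum_y w y r * a y x + L * w x r.
    rewrite (bigD1 x) //=.
    have h1 : 0 <= \sum_(y | y != x) w y r * a y x.
      by apply: sumr_ge0 => y hyx; apply: mulr_ge0; [exact: hy| apply: ha; rewrite eq_sym].
    have h2 : 0 <= w x r * (a x x + L) by apply: mulr_ge0; [exact: hy| exact: hLd].
    rewrite mulrDr in h2; lra.
  have hee : 0 < eps * (e r * e r) by apply: mulr_gt0 => //; apply: mulr_gt0; exact: expR_gt0.
  have hL1 := hLs x.
  have -> : dw x r = (\sum_y w y r * a y x + L * w x r) + eps * (e r * e r) * (L - \sum_y a y x).
    rewrite /dw hsplit /w e2; ring.
  by apply: ltr_wpDl => //; apply: mulr_gt0 => //; lra.
have w0 : forall x, w x 0 = u 0 x + eps.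
  by move=> x; rewrite /w /e !mulr0 expR0 mul1r mulr1.
have w0pos : forall x, 0 < w x 0.
  by move=> x; rewrite w0; have := h0 x; lra.
have ws : w x0 s < 0.
  have -> : w x0 s = e s * u s x0 / 2.
    rewrite /w e2 /eps; field; rewrite gt_eqF //.
  have h : 0 < e s * (- u s x0) by apply: mulr_gt0; lra.
  rewrite mulrN in h; lra.
pose E := [set r : R | 0 <= r /\ r <= s /\ exists x, w x r <= 0].
have Es : E s by split => //; split => //; exists x0; exact: ltW.
have hE : has_inf E.
  by split; [exists s | exists 0 => r [] ].
pose c := inf E.
have cle : forall r, E r -> c <= r by move=> r Er; exact: (ge_inf hE.2).
have c0 : 0 <= c by apply: lb_le_inf; [exact: hE.1| move=> r []].
have cs : c <= s := cle s Es.
have hlow : forall r, 0 <= r -> r < c -> forall y, 0 < w y r.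
  move=> r r0 rc y; rewrite ltNge; apply/negP => hw0.
  have : c <= r by apply: cle; split=> //; split; [lra | exists y].
  lra.
have [x hx] : exists x, w x c <= 0.
  case: (pselect (exists x, w x c <= 0)) => // hn.
  have hall : forall x, 0 < w x c.
    by move=> x; rewrite ltNge; apply/negP => h; apply: hn; exists x.
  have hnear : \forall r \near c, forall x, 0 < w x r.
    apply: (@filter_forall R I (fun x r => 0 < w x r) (nbhs c) _) => x.
    exact: (cvgr_gt _ (cont_of_derive (hw c x)) _ (hall x)).
  have [d d0 hd'] := (nbhs_ballP _ _).1 hnear.
  have [r Er rlt] := inf_adherent d0 hE.
  have hr : forall x, 0 < w x r.
    apply: hd'; rewrite /ball /=.
    have := cle r Er; rewrite -/c in rlt.
    move=> crl; rewrite ler0_norm; [lra|lra].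
  by case: Er => _ [_ [y hy]]; have := hr y; lra.
have cpos : 0 < c.
  rewrite lt_def c0 andbT; apply/eqP => c0'.
  by move: hx; rewrite c0' => hx; have := w0pos x; lra.
have [xi xi_in hmvt] := @MVT R (w x) (dw x) 0 c cpos (fun r _ => hw r x)
  (derivable_within_continuous (fun r _ => der_of (hw r x))).
move: xi_in; rewrite in_itv /= => /andP [xi0 xic].
have := hpos xi x (fun y => ltW (hlow xi (ltW xi0) xic y)).
have := w0pos x.
move: hmvt; rewrite subr0 => hmvt.
have hprod : 0 < dw x xi * c -> False.
  by rewrite -hmvt; have := w0pos x; lra.
move=> h1 h2; apply: hprod; exact: mulr_gt0.
Qed.

Lemma ode_pos (I : finType) (a : I -> I -> R) (u : R -> I -> R) :
  (forall x y, x != y -> 0 <= a y x) ->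
  (forall (s : R) x, is_derive s 1 (fun v => u v x) (\sum_y u s y * a y x)) ->
  (forall (s : R) x, 0 <= s -> 0 <= u s x) ->
  forall x, (0 < u 0 x \/ exists y, [/\ 0 < a y x, y != x & forall s : R, 0 < s -> 0 < u s y]) ->
  forall s : R, 0 < s -> 0 < u s x.
Proof.
move=> ha hd hnn x hx s s0.
pose L : R := \sum_y `|a y x| + 1.
have hLd : 0 <= a x x + L.
  have := le_sum_term (fun y => `|a y x|) x (fun i => normr_ge0 _); rewrite /=.
  have := ler_norm (- a x x); rewrite normrN /L; lra.
pose e r := expR (L * r).
pose g r := e r * u r x.
pose dg r := L * e r * u r x + e r * (\sum_y u r y * a y x).
have hg : forall r : R, is_derive r 1 g (dg r).
  move=> r; have H := is_deriveM (is_derive_expRk L r) (hd r x).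
  apply: (is_derive_eq H); rewrite /dg /e /GRing.scale /=; ring.
have dgE : forall r, dg r = e r * ((a x x + L) * u r x + \sum_(y | y != x) u r y * a y x).
  by move=> r; rewrite /dg (bigD1 x) //=; ring.
have [xi xi_in hmvt] := @MVT R g dg 0 s s0 (fun r _ => hg r)
  (derivable_within_continuous (fun r _ => der_of (hg r))).
move: xi_in; rewrite in_itv /= => /andP [xi0 xis].
have hsum : 0 <= \sum_(y | y != x) u xi y * a y x.
  by apply: sumr_ge0 => y hyx; apply: mulr_ge0; [apply: hnn; exact: ltW| apply: ha; rewrite eq_sym].
have hux : 0 <= (a x x + L) * u xi x by apply: mulr_ge0 => //; apply: hnn; exact: ltW.
have exi : 0 < e xi by exact: expR_gt0.
have es : 0 < e s by exact: expR_gt0.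
have g0 : g 0 = u 0 x by rewrite /g /e mulr0 expR0 mul1r.
move: hmvt; rewrite subr0 g0 => hmvt.
suff : 0 < g s by rewrite /g pmulr_rgt0.
case: hx => [hx|[y [hay hyx hy]]].
  have : 0 <= dg xi * s by apply: mulr_ge0; [rewrite dgE; apply: mulr_ge0; [exact: ltW| exact: addr_ge0]| exact: ltW].
  by rewrite -hmvt; lra.
have hsum2 : u xi y * a y x <= \sum_(y | y != x) u xi y * a y x.
  rewrite (bigD1 y) //= lerDl; apply: sumr_ge0 => z /andP [hzx _].
  by apply: mulr_ge0; [apply: hnn; exact: ltW| apply: ha; rewrite eq_sym].
have hpos : 0 < u xi y * a y x by apply: mulr_gt0 => //; exact: hy.
have : 0 < dg xi * s.
  apply: mulr_gt0 => //; rewrite dgE; apply: mulr_gt0 => //; lra.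
have := hnn 0 x (lexx 0).
by rewrite -hmvt; lra.
Qed.
End Ode.
Local Close Scope classical_set_scope.

Section Comb.
Variables (S d : nat).

Lemma hamming_sym (x y : state S d) : hamming x y = hamming y x.
Proof. by rewrite /hamming; apply: eq_card => j; rewrite !inE eq_sym. Qed.

Lemma hamming_xx (x : state S d) : hamming x x = 0%N.
Proof. by rewrite /hamming; apply/eqP; rewrite cards_eq0; apply/eqP/setP => j; rewrite !inE eqxx. Qed.

Lemma hamming0 (x y : state S d) : hamming x y = 0%N -> x = y.
Proof.
rewrite /hamming => /eqP; rewrite cards_eq0 => /eqP H.
apply/ffunP => j; apply/eqP; apply/negPn/negP => hj.
have : j \in [set j | x j != y j] by rewrite inE.
by rewrite H inE.
Qed.

Lemma hamming_step (x x0 : state S d) : x != x0 ->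
  exists y : state S d, (hamming y x0 < hamming x x0)%N /\ hamming y x = 1%N.
Proof.
move=> hx.
have [j0 hj0] : exists j0, x j0 != x0 j0.
  case: (pselect (exists j0, x j0 != x0 j0)) => // hn.
  move/eqP: hx; case; apply/ffunP => j; apply/eqP; apply/negPn/negP => hj.
  by apply: hn; exists j.
pose y : state S d := [ffun j => if j == j0 then x0 j else x j].
exists y; split.
  rewrite /hamming (cardsD1 j0 [set j | x j != x0 j]) inE hj0 add1n ltnS.
  apply/subset_leq_card/fintype.subsetP => j; rewrite !inE /y ffunE.
  by case: (j == j0) => //; rewrite eqxx.
rewrite /hamming -(cards1 j0); apply: eq_card => j; rewrite !inE /y ffunE.
by case: (eqVneq j j0) => [->|]; [rewrite eq_sym hj0|rewrite eqxx].
Qed.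

Variable (hS : (0 < S)%N).

Lemma oplus_val (y : state S d) i c j :
  val (oplus y i c j) = if j == i then (((y j : nat) + c) %% S)%N else y j.
Proof.
rewrite /oplus ffunE; case: (j == i) => //; rewrite val_insubd ltn_pmod //.
Qed.

Lemma oplus_eq (y z : state S d) i c j :
  (oplus y i c j == oplus z i c j) = (y j == z j).
Proof.
rewrite -val_eqE /= !oplus_val; case: (j == i) => //.
by rewrite eqn_modDr !modn_small ?ltn_ord.
Qed.

Lemma oplus_inj i c : injective (fun y : state S d => oplus y i c).
Proof.
move=> y z /= H; apply/ffunP => j; apply/eqP; rewrite -(oplus_eq y z i c) H //.
Qed.

Lemma hamming_oplus (y z : state S d) i c :
  hamming (oplus y i c) (oplus z i c) = hamming y z.
Proof. by rewrite /hamming; apply: eq_card => j; rewrite !inE oplus_eq. Qed.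

End Comb.

Section Rates.
Context {R : realType}.
Variables (S d : nat) (hS : (0 < S)%N).

Lemma Qrate_sym (x y : state S d) : Qrate R x y = Qrate R y x.
Proof. by rewrite /Qrate hamming_sym. Qed.

Lemma Qrate_xx (x : state S d) : Qrate R x x = 0.
Proof. by rewrite /Qrate hamming_xx. Qed.

Lemma Qrate_ge0 (x y : state S d) : 0 <= Qrate R x y.
Proof. by rewrite /Qrate; case: ifP => // _; rewrite invr_ge0 ler0n. Qed.

Lemma Qrate_oplus (y z : state S d) i c :
  Qrate R (oplus y i c) (oplus z i c) = Qrate R y z.
Proof. by rewrite /Qrate hamming_oplus. Qed.

Lemma sum_oplus (F : state S d -> R) i c :
  \sum_y F (oplus y i c) = \sum_y F y.
Proof. by rewrite [RHS](reindex_inj (@oplus_inj S d hS i c)). Qed.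

Lemma sum_neq (z : state S d) (X : state S d -> R) :
  \sum_(y | y != z) Qrate R y z * X y = \sum_y Qrate R y z * X y.
Proof. by rewrite [RHS](bigD1 z) //= Qrate_xx mul0r add0r. Qed.

Lemma Qgen_sum (r : state S d -> R) (z : state S d) :
  \sum_y r y * Qgen R y z = \sum_y Qrate R y z * r y - r z * \sum_w Qrate R z w.
Proof.
rewrite (bigD1 z) //= {1}/Qgen eqxx.
have e1 : \sum_(y | y != z) r y * Qgen R y z = \sum_y Qrate R y z * r y.
  by rewrite -sum_neq; apply: eq_bigr => y hy; rewrite /Qgen (negbTE hy) mulrC.
have e2 : \sum_(w | w != z) Qrate R z w = \sum_w Qrate R z w.
  by rewrite [RHS](bigD1 z) //= Qrate_xx add0r.
rewrite e1 e2; ring.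
Qed.

End Rates.

Section Const.
Context {R : realType}.

Lemma const_sum (I : finType) (p H : R -> I -> R) (A : R -> I -> I -> R)
  (dH : R -> I -> R) (l t : R) :
  l < t ->
  (forall (u : R) y, l <= u -> u <= t ->
     is_derive u 1 (fun v => p v y) (\sum_z p u z * A u z y)) ->
  (forall (u : R) y, l <= u -> u <= t -> is_derive u 1 (fun v => H v y) (dH u y)) ->
  (forall (u : R) z, l <= u -> u <= t -> \sum_y A u z y * H u y + dH u z = 0) ->
  \sum_y p t y * H t y = \sum_y p l y * H l y.
Proof.
move=> hlt hp hH h0.
pose F u := \sum_y p u y * H u y.
pose dF u := \sum_y (p u y * dH u y + H u y * \sum_z p u z * A u z y).
have hF : forall u, l <= u -> u <= t -> is_derive u 1 F (dF u).
  move=> u h1 h2; apply: is_derive_bigsum => y.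
  have HH := is_deriveM (hp u y h1 h2) (hH u y h1 h2).
  exact: (is_derive_eq HH).
have dF0 : forall u, l <= u -> u <= t -> dF u = 0.
  move=> u hu1 hu2; rewrite /dF big_split /=.
  have -> : \sum_y H u y * (\sum_z p u z * A u z y)
          = \sum_z p u z * (\sum_y A u z y * H u y).
    under eq_bigr do rewrite mulr_sumr.
    rewrite exchange_big /=; apply: eq_bigr => z _; rewrite mulr_sumr.
    by apply: eq_bigr => y _; ring.
  rewrite -big_split /=; apply: big1 => z _; by rewrite -mulrDr addrC h0 // mulr0.
have hoo : forall r, r \in `]l, t[ -> is_derive r 1 F (dF r).
  by move=> r; rewrite in_itv /= => /andP [h1 h2]; apply: hF; exact: ltW.
have hcc : {in `[l, t], forall r, derivable F r 1}.
  by move=> r; rewrite in_itv /= => /andP [h1 h2]; exact: der_of (hF r h1 h2).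
have [xi xi_in hm] := @MVT R F dF l t hlt hoo (derivable_within_continuous hcc).
move: xi_in; rewrite in_itv /= => /andP [hx1 hx2].
move: hm; rewrite dF0 ?mul0r; [|exact: ltW|exact: ltW].
by move/eqP; rewrite subr_eq0 => /eqP.
Qed.

End Const.

Section Key.
Context {R : realType}.
Variables (S d : nat) (hS : (0 < S)%N).

Lemma key_identity (q : R -> state S d -> R) (T u : R)
  (rpos : forall y, 0 < q (T - u) y) (z : state S d) i c :
  \sum_y Qrev q T u z y * score q (T - u) (oplus y i c) y
  + (q (T - u) (oplus z i c) * (- (q (T - u) z) ^- 2 * (- \sum_y q (T - u) y * Qgen R y z))
     + (q (T - u) z)^-1 * (- \sum_y q (T - u) y * Qgen R y (oplus z i c))) = 0.
Proof.
set r := q (T - u).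
have rn0 : forall y, r y != 0 by move=> y; rewrite gt_eqF.
rewrite !Qgen_sum.
have eA2 : \sum_y Qrate R y (oplus z i c) * r y = \sum_y Qrate R y z * r (oplus y i c).
  rewrite -(@sum_oplus R S d hS (fun y => Qrate R y (oplus z i c) * r y) i c) /=.
  by apply: eq_bigr => y _; rewrite Qrate_oplus.
have eL : \sum_w Qrate R (oplus z i c) w = \sum_w Qrate R z w.
  rewrite -(@sum_oplus R S d hS (fun w => Qrate R (oplus z i c) w) i c) /=.
  by apply: eq_bigr => y _; rewrite Qrate_oplus.
rewrite eA2 eL.
rewrite (bigD1 z) //= /Qrev eqxx.
have e1 : \sum_(y | y != z) (if z == y then - \sum_(w | w != z) Qrev_rate q T u z w
                             else Qrev_rate q T u z y) * score q (T - u) (oplus y i c) y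
        = (\sum_y Qrate R y z * r (oplus y i c)) / r z.
  rewrite -sum_neq mulr_suml; apply: eq_bigr => y hy.
  rewrite eq_sym (negbTE hy) /Qrev_rate /score -/r; field.
  by rewrite rn0 rn0.
have e2 : \sum_(w | w != z) Qrev_rate q T u z w = (\sum_y Qrate R y z * r y) / r z.
  rewrite -sum_neq mulr_suml; apply: eq_bigr => y hy.
  by rewrite /Qrev_rate /score -/r; field.
rewrite e1 e2 /score -/r.
set A1 := \sum_y Qrate R y z * r y.
set A2 := \sum_y Qrate R y z * r (oplus y i c).
set Lz := \sum_w Qrate R z w.
by field.
Qed.

End Key.

Theorem mainTheorem18 (R : realType) (S d : nat) (hS : (0 < S)%N)
  (q0 : state S d -> R)
  (hq0_nonneg : forall x, 0 <= q0 x) (hq0_sum : \sum_x q0 x = 1)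
  (q : R -> state S d -> R)
  (hq_init : q 0 = q0)
  (hq_ode : forall (t : R) (x : state S d),
      is_derive t 1 (fun u => q u x) (\sum_y q t y * Qgen R y x))
  (T : R) (hT : 0 < T)
  (l : R) (xl : state S d)
  (p : R -> state S d -> R)
  (hp_init : forall y, p l y = (y == xl)%:R)
  (hp_ode : forall (t : R) (y : state S d), t < T ->
      is_derive t 1 (fun u => p u y) (\sum_z p t z * Qrev q T t z y))
  (t : R) (hl : 0 <= l) (hlt : l < t) (htT : t < T)
  (i : 'I_d) (c : nat) (hc1 : (1 <= c)%N) (hcS : (c <= S)%N) :
  \sum_y p t y * score q (T - t) (oplus y i c) y
    = score q (T - l) (oplus xl i c) xl
  /\
  (forall g : state S d -> R,
    \sum_y p t y * ((score q (T - l) (oplus xl i c) xl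
                     - score q (T - t) (oplus y i c) y) * g xl) = 0).
Proof.
have ha : forall x y : state S d, x != y -> 0 <= Qgen R y x.
  by move=> x y hxy; rewrite /Qgen eq_sym (negbTE hxy); exact: Qrate_ge0.
have qnn : forall (s : R) x, 0 <= s -> 0 <= q s x.
  apply: (ode_nonneg _ _ _ ha hq_ode) => x; rewrite hq_init; exact: hq0_nonneg.
have [x0 hx0] : exists x0, 0 < q0 x0.
  case: (pselect (exists x0, 0 < q0 x0)) => // hn.
  have : \sum_x q0 x = 0.
    apply: big1 => x _; apply/eqP; rewrite eq_le hq0_nonneg andbT leNgt.
    by apply/negP => h; apply: hn; exists x.
  by rewrite hq0_sum => /eqP; rewrite oner_eq0.
have qpos : forall (s : R) x, 0 < s -> 0 < q s x.
  have key : forall n x, (hamming x x0 <= n)%N -> forall s : R, 0 < s -> 0 < q s x.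
    elim=> [|n IH] x hn.
      rewrite leqn0 in hn; have -> := @hamming0 _ _ _ _ (eqP hn).
      apply: (ode_pos _ _ _ ha hq_ode qnn); left; rewrite hq_init //.
    apply: (ode_pos _ _ _ ha hq_ode qnn).
    case: (eqVneq x x0) => [->|hx]; first by left; rewrite hq_init.
    right; have [y [hy1 hy2]] := @hamming_step _ _ _ _ hx.
    have hyx : y != x by apply/negP => /eqP hyx; move: hy2; rewrite hyx hamming_xx.
    exists y; split => //.
    - by rewrite /Qgen (negbTE hyx) /Qrate hy2 /= invr_gt0 ltr0n.
    - by apply: IH; rewrite -ltnS; exact: (leq_trans hy1 hn).
  by move=> s x; apply: (key (hamming x x0)).
have der_rev : forall (u : R) x,
    is_derive u 1 (fun v => q (T - v) x) (- \sum_y q (T - u) y * Qgen R y x).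
  move=> u x.
  have hg : is_derive u 1 (fun v : R => T - v) (-1).
    have H := is_deriveB (is_derive_cst T u 1) (is_derive_id u 1).
    by apply: (is_derive_eq H); rewrite sub0r.
  have H := @is_derive1_comp R (fun v => q v x) (fun v => T - v) u _ _ (hq_ode (T - u) x) hg.
  by apply: (is_derive_eq H); rewrite mulrN1.
have rpos : forall u, u <= t -> forall y, 0 < q (T - u) y.
  by move=> u hu y; apply: qpos; lra.
pose Hf u y := score q (T - u) (oplus y i c) y.
pose dH u y := q (T - u) (oplus y i c) * (- (q (T - u) y) ^- 2 * (- \sum_w q (T - u) w * Qgen R w y))
     + (q (T - u) y)^-1 * (- \sum_w q (T - u) w * Qgen R w (oplus y i c)).
have hH : forall (u : R) y, l <= u -> u <= t -> is_derive u 1 (fun v => Hf v y) (dH u y).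
  move=> u y h1 h2.
  have hnz : q (T - u) y != 0 by rewrite gt_eqF // rpos.
  have HH := is_deriveM (der_rev u (oplus y i c)) (is_deriveV hnz (der_rev u y)).
  by apply: (is_derive_eq HH).
have hp : forall (u : R) y, l <= u -> u <= t ->
    is_derive u 1 (fun v => p v y) (\sum_z p u z * Qrev q T u z y).
  by move=> u y h1 h2; apply: hp_ode; lra.
have hkey : forall (u : R) z, l <= u -> u <= t ->
    \sum_y Qrev q T u z y * Hf u y + dH u z = 0.
  by move=> u z h1 h2; exact: (@key_identity R S d hS q T u (rpos u h2) z i c).
have c1 := const_sum _ p Hf (Qrev q T) dH l t hlt hp hH hkey.
have hinit : forall F : state S d -> R, \sum_y p l y * F y = F xl.
  move=> F; rewrite (bigD1 xl) //= hp_init eqxx mul1r big1 ?addr0 //.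
  by move=> y hy; rewrite hp_init (negbTE hy) mul0r.
pose one : R -> state S d -> R := fun _ _ => 1.
pose zer : R -> state S d -> R := fun _ _ => 0.
have hH1 : forall (u : R) y, l <= u -> u <= t ->
    is_derive u 1 (fun v => one v y) (zer u y).
  move=> u y _ _; rewrite /one /zer; exact: is_derive_cst.
have hkey1 : forall (u : R) z, l <= u -> u <= t ->
    \sum_y Qrev q T u z y * one u y + zer u z = 0.
  move=> u z _ _; rewrite /one /zer /= addr0.
  under eq_bigr do rewrite mulr1.
  rewrite (bigD1 z) //= {1}/Qrev eqxx.
  rewrite [X in _ + X](eq_bigr (fun y => Qrev_rate q T u z y)); first exact: addNr.
  by move=> y hy; rewrite /Qrev eq_sym (negbTE hy).
have c2 := const_sum _ p one (Qrev q T) zer l t hlt hp hH1 hkey1.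
have psum : \sum_y p t y = 1.
  move: c2; rewrite /one /= hinit.
  by under eq_bigr do rewrite mulr1.
have main : \sum_y p t y * score q (T - t) (oplus y i c) y = score q (T - l) (oplus xl i c) xl.
  by move: c1; rewrite /Hf hinit.
split => // g.
set A := score q (T - l) (oplus xl i c) xl.
transitivity (\sum_y (A * g xl * p t y - g xl * (p t y * score q (T - t) (oplus y i c) y))).
  by apply: eq_bigr => y _; ring.
by rewrite sumrB -!mulr_sumr main psum /A mulr1 mulrC subrr.
Qed.
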